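(* Let $\mathbf m\ge 0$ be a multi-index such that $\mu_{\mathbf k}<0$ for all $\mathbf k\notin F_{\mathbf m}$, and suppose $\mu_*:=\max_{\mathbf k\notin F_{\mathbf m}}\mu_{\mathbf k}$ exists. Let $\gamma\in[0,1)$ (with $\gamma\in(0,1)$ if $q=2$; $\gamma=0$ is allowed if $q=0$). Assume: (i) there is $W_{m,q}>0$ with $\sup_{(t,s)\in\mathcal S_J}\|\bar U^{(\mathbf m)}(t,s)\mathcal Q\psi^{(\mathbf m)}\|_\omega\le W_{m,q}\|\psi^{(\mathbf m)}\|_\omega$ for all $\psi\in\ell^1_\omega$; (ii) there is a function $W^{(\infty)}_q:\mathcal S_J\to[0,\infty)$ with $\|\bar U^{(\infty)}(t,s)\mathcal Q\psi^{(\infty)}\|_\omega\le W^{(\infty)}_q(t,s)\|\psi^{(\infty)}\|_\omega$ for all $(t,s)\in\mathcal S_J$, $\psi\in\ell^1_\omega$; (iii) there are constants $W_{\infty,q}>0$, $\overline W_{\infty,q}\ge0$, $\overline{\overline W}_{\infty,q}\ge0$ with $\sup_{(t,s)\in\mathcal S_J}(t-s)^\gamma W^{(\infty)}_q(t,s)\le W_{\infty,q}$, $\sup_{(t,s)\in\mathcal S_J}(t-s)^\gamma\int_s^tW^{(\infty)}_q(r,s)\,dr\le\overline W_{\infty,q}$ and $\sup_{(t,s)\in\mathcal S_J}(t-s)^\gamma\int_s^tW^{(\infty)}_q(t,r)\,dr\le\overline W_{\infty,q}$, $\sup_{(t,s)\in\mathcal S_J}(t-s)^\gamma\int_s^t\int_s^rW^{(\infty)}_q(r,\sigma)(\sigma-s)^{-\gamma}d\sigma\,dr\le\overline{\overline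 W}_{\infty,q}$ and $\sup_{(t,s)\in\mathcal S_J}(t-s)^\gamma\int_s^tW^{(\infty)}_q(t,r)\int_s^r(\sigma-s)^{-\gamma}d\sigma\,dr\le\overline{\overline W}_{\infty,q}$; (iv) there are constants $\mathcal E_{m,\infty},\mathcal E_{\infty,m}\ge0$ with $\sup_{t\in J}\|\Pi^{(\mathbf m)}D\mathcal N(\bar a(t))(I-\Pi^{(\mathbf m)})\|_{B(\ell^1_\omega)}\le\mathcal E_{m,\infty}$ and $\sup_{t\in J}\|(I-\Pi^{(\mathbf m)})D\mathcal N(\bar a(t))\Pi^{(\mathbf m)}\|_{B(\ell^1_\omega)}\le\mathcal E_{\infty,m}$; (v) for every $s\in[0,\tau)$ and $\psi\in\ell^1_\omega$, the function $b(t)=U(t,s)\mathcal Q\psi$, $t\in(s,\tau]$, is a continuous $\ell^1_\omega$-valued function with $\sup_{t\in(s,\tau]}(t-s)^\gamma\|b(t)\|_\omega<\infty$, whose parts $b^{(\mathbf m)}=\Pi^{(\mathbf m)}b$, $b^{(\infty)}=(I-\Pi^{(\mathbf m)})b$ satisfy, for $t\in(s,\tau]$, $b^{(\mathbf m)}(t)=\bar U^{(\mathbf m)}(t,s)\mathcal Q\psi^{(\mathbf m)}+\int_s^t\bar U^{(\mathbf m)}(t,r)\Pi^{(\mathbf m)}\mathcal QD\mathcal N(\bar a(r))b^{(\infty)}(r)\,dr$, $b^{(\infty)}(t)=\bar U^{(\infty)}(t,s)\mathcal Q\psi^{(\infty)}+\int_s^t\bar U^{(\infty)}(t,r)(I-\Pi^{(\mathbf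 m)})\mathcal QD\mathcal N(\bar a(r))b^{(\mathbf m)}(r)\,dr$. If $\kappa:=1-W_{m,q}\overline{\overline W}_{\infty,q}\mathcal E_{m,\infty}\mathcal E_{\infty,m}>0$, then for all $(t,s)\in\mathcal S_J$ and $\psi\in\ell^1_\omega$, $(t-s)^\gamma\|U(t,s)\mathcal Q\psi\|_\omega\le \mathbf W_q\|\psi\|_\omega$, where $\mathbf W_q:=\kappa^{-1}\left\|\begin{pmatrix}\tau^\gamma W_{m,q}& W_{m,q}\overline W_{\infty,q}\mathcal E_{m,\infty}\\ W_{m,q}\overline W_{\infty,q}\mathcal E_{\infty,m}&W_{\infty,q}\end{pmatrix}\right\|_1$ and $\|\cdot\|_1$ is the matrix $1$-norm (maximum absolute column sum).
   Context: Standing setting. Fix $d\ge1$ and $L_1,\dots,L_d>0$. Multi-indices are $\mathbf k=(k_1,\dots,k_d)\in\mathbb Z_{\ge0}^d$; inequalities between multi-indices are componentwise. For $\mathbf m=(m_1,\dots,m_d)$ let $F_{\mathbf m}=\{\mathbf k\ge0:\mathbf k<\mathbf m\}$. Let $\alpha_{\mathbf k}=2^{\delta_{k_1,0}}\cdots2^{\delta_{k_d,0}}$ ($\delta$ the Kronecker delta), fix $\nu_F\ge1$, and set $\omega_{\mathbf k}=\alpha_{\mathbf k}\nu_F^{k_1+\cdots+k_d}$. $\ell^1_\omega$ is the Banach space of real sequences $a=(a_{\mathbf k})_{\mathbf k\ge0}$ with $\|a\|_\omega=\sum_{\mathbf k\ge0}|a_{\mathbf k}|\omega_{\mathbf k}<\infty$;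 $B(\ell^1_\omega)$ denotes bounded operators with the operator norm. Let $(\mathbf{kL})=((k_1L_1)^2+\cdots+(k_dL_d)^2)^{1/2}$. For given real $\lambda_0,\lambda_1,\lambda_2$ let $\mu_{\mathbf k}=\lambda_0-\lambda_1(\mathbf{kL})^2+\lambda_2(\mathbf{kL})^4$ and let $\mathcal L$ be the diagonal operator $(\mathcal L\phi)_{\mathbf k}=\mu_{\mathbf k}\phi_{\mathbf k}$ with domain $D(\mathcal L)=\{\phi\in\ell^1_\omega:\mathcal L\phi\in\ell^1_\omega\}$. Fix $q\in\{0,2\}$ and let $(\mathcal Q\phi)_{\mathbf k}=\mathrm i^q(\mathbf{kL})^q\phi_{\mathbf k}$ (a real multiplier since $\mathrm i^2=-1$). $\mathcal N:\ell^1_\omega\to\ell^1_\omega$ is Fréchet differentiable with $\mathcal N(0)=0$, $D\mathcal N(0)=0$. $\Pi^{(\mathbf m)}$ is the projection keeping the entries with $\mathbf k\in F_{\mathbf m}$ and setting the others to $0$; $\phi^{(\mathbf m)}=\Pi^{(\mathbf m)}\phi$, $\phi^{(\infty)}=\phi-\phi^{(\mathbf m)}$. Fix $\tau>0$, $J=(0,\tau]$, $X=C(J;\ell^1_\omega)$ with $\|a\|=\sup_{t\in J}\|a(t)\|_\omega$, and a fixed function $\bar a\in X$ (the approximate solution). $\{U(t,s)\}_{0\le s\le t\le\tau}$ is the evolution operator of the linearized problem $\dot b=\mathcal Lb+\mathcal QD\mathcal N(\bar a(t))b$, $b(s)=\phi$, i.e. $U(t,s)\phi=b(t)$. Let $\mathcal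 S_J=\{(t,s):0<s<t\le\tau\}$. Additional notation: $\bar U^{(\mathbf m)}(t,s)$ is the solution operator (time $s$ to time $t$) of the finite-dimensional linear system $\dot c=\mathcal Lc+\Pi^{(\mathbf m)}\mathcal QD\mathcal N(\bar a(t))c$ on sequences supported in $F_{\mathbf m}$ (extended by $0$ outside $F_{\mathbf m}$), and $\bar U^{(\infty)}(t,s)$ is the solution operator of $\dot c=\mathcal Lc+(I-\Pi^{(\mathbf m)})\mathcal QD\mathcal N(\bar a(t))c$ on sequences vanishing on $F_{\mathbf m}$; both are linear. *)

(* Defs.v *)
From HB Require Import structures.
From mathcomp Require Import all_boot all_order all_algebra.
From mathcomp Require Import all_classical all_reals all_analysis.
Set Implicit Arguments. Unset Strict Implicit. Unset Printing Implicit Defensive.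
Import Order.TTheory GRing.Theory Num.Theory.
Import numFieldNormedType.Exports.
Local Open Scope classical_set_scope.
Local Open Scope ring_scope.

Section Defs.
Variables (R : realType) (d : nat).

Definition midx := {ffun 'I_d -> nat}.
Definition rseq := midx -> R.

Definition in_Fm (m k : midx) : bool := [forall i, k i < m i]%N.

Definition mabs (k : midx) : nat := (\sum_(i < d) k i)%N.

Definition alpha (k : midx) : R := \prod_(i < d) (if k i == 0%N then 2 else 1).

Definition omega (nuF : R) (k : midx) : R := alpha k * nuF ^+ mabs k.

(* weighted l^1 norm, valued in the extended reals (+oo iff a is not in l^1_omega) *)
Definition wnorm (nuF : R) (a : rseq) : \bar R :=
  \esum_(k in [set: midx]) (`|a k| * omega nuF k)%:E.

Definition inl1 (nuF : R) (a : rseq) : Prop := (wnorm nuF a < +oo)%E.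

Definition kLsq (L : 'I_d -> R) (k : midx) : R := \sum_(i < d) ((k i)%:R * L i) ^+ 2.

Definition mu (L : 'I_d -> R) (l0 l1 l2 : R) (k : midx) : R :=
  l0 - l1 * kLsq L k + l2 * (kLsq L k) ^+ 2.

(* (Q phi)_k = i^q (kL)^q phi_k, for q in {0,2}: i^q (kL)^q = (-1)^{q/2} ((kL)^2)^{q/2} *)
Definition Qop (L : 'I_d -> R) (q : nat) (phi : rseq) : rseq :=
  fun k => (-1) ^+ q./2 * (kLsq L k) ^+ q./2 * phi k.

Definition Pim (m : midx) (phi : rseq) : rseq :=
  fun k => if in_Fm m k then phi k else 0.
Definition Piinf (m : midx) (phi : rseq) : rseq :=
  fun k => if in_Fm m k then 0 else phi k.

Definition sadd (a b : rseq) : rseq := fun k => a k + b k.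
Definition ssub (a b : rseq) : rseq := fun k => a k - b k.
Definition sscale (c : R) (a : rseq) : rseq := fun k => c * a k.

Definition opnorm (nuF : R) (T : rseq -> rseq) : \bar R :=
  ereal_sup [set wnorm nuF (T x) | x in [set x | (wnorm nuF x <= 1)%E]].

Definition bounded_linear (nuF : R) (T : rseq -> rseq) : Prop :=
  (forall x, inl1 nuF x -> inl1 nuF (T x)) /\
  (forall c x y, inl1 nuF x -> inl1 nuF y ->
     T (sadd (sscale c x) y) = sadd (sscale c (T x)) (T y)) /\
  (exists C : R, forall x, inl1 nuF x -> (wnorm nuF (T x) <= C%:E * wnorm nuF x)%E).

Definition frechet_deriv (nuF : R) (N : rseq -> rseq) (DN : rseq -> rseq -> rseq) : Prop :=
  (forall x, inl1 nuF x -> inl1 nuF (N x)) /\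
  forall x, inl1 nuF x -> bounded_linear nuF (DN x) /\
    forall eps : R, 0 < eps -> exists delta : R, 0 < delta /\
      forall h, inl1 nuF h -> (wnorm nuF h < delta%:E)%E ->
        (wnorm nuF (ssub (ssub (N (sadd x h)) (N x)) (DN x h))
           <= eps%:E * wnorm nuF h)%E.

Definition leb := (@lebesgue_measure R).

(* Bochner integrability on ]s,t[ of an l^1_omega-valued function
   (strong measurability <-> measurability of every coordinate, l^1_omega separable) *)
Definition bochner_integrable (nuF s t : R) (f : R -> rseq) : Prop :=
  (forall k, measurable_fun `]s, t[ (fun r => f r k)) /\
  (\int[leb]_(r in `]s, t[) wnorm nuF (f r) < +oo)%E.

(* Bochner integral of an l^1_omega-valued function, computed coordinatewise *)
Definition vint (s t : R) (f : R -> rseq) : rseq :=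
  fun k => \int[leb]_(r in `]s, t[) f r k.

Definition mxnorm1 (p n : nat) (M : 'M[R]_(p, n)) : R :=
  \big[Num.max/0]_(j < n) \sum_(i < p) `|M i j|.

End Defs.
Arguments leb {R}.

(* Main.v *)
Require Import Defs.
From HB Require Import structures.
From mathcomp Require Import all_boot all_order all_algebra.
From mathcomp Require Import all_classical all_reals all_analysis.
From mathcomp Require Import measurable_realfun measurable_fun_approximation.
From mathcomp Require Import lra ring.
Import Order.TTheory GRing.Theory Num.Theory.
Import numFieldNormedType.Exports.
Local Open Scope classical_set_scope.
Local Open Scope ring_scope.
Import HBNNSimple.


Section Gen.
Local Open Scope ereal_scope.
Context d (T : measurableType d) (R : realType) (mu : {measure set T -> \bar R}).

Lemma G1 (D : set T) (f g : T -> \bar R) : (forall x, D x -> 0 <= f x) ->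
  (forall x, D x -> f x <= g x) ->
  \int[mu]_(x in D) f x <= \int[mu]_(x in D) g x.
Proof.
move=> f0 fg.
have g0 x : D x -> 0 <= g x by move=> Dx; exact: le_trans (f0 _ Dx) (fg _ Dx).
rewrite (ge0_integralE mu f0) (ge0_integralE mu g0).
apply: ge_ereal_sup => _ [h hf <-]; apply: ereal_sup_ubound; exists h => // x.
apply: le_trans (hf x) _; rewrite /patch; case: ifPn => // /set_mem Dx; exact: fg.
Qed.

Lemma G2 (D : set T) (f : T -> \bar R) (k : R) : (0 <= k)%R ->
  (forall x, D x -> 0 <= f x) ->
  \int[mu]_(x in D) (k%:E * f x) <= k%:E * \int[mu]_(x in D) f x.
Proof.
move=> k0 f0; have [->|kn0] := eqVneq k 0%R.
  by rewrite mul0e; under eq_integral do rewrite mul0e; rewrite integral0.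
have kp : (0 < k)%R by rewrite lt0r kn0.
have kf0 x : D x -> 0 <= k%:E * f x by move=> Dx; rewrite mule_ge0// f0.
rewrite (ge0_integralE mu f0) (ge0_integralE mu kf0).
apply: ge_ereal_sup => _ [h hf <-].
have ki0 : (0 <= k^-1)%R by rewrite invr_ge0.
pose h' := scale_nnsfun h ki0.
have -> : sintegral mu h = k%:E * sintegral mu h'.
  rewrite /h' /scale_nnsfun.
  rewrite (_ : sintegral mu (mul_nnsfun _ h) = sintegral mu (cst k^-1 \* h)%R) //.
  by rewrite sintegralrM muleA -EFinM mulfV // mul1e.
rewrite lee_pmul2l// ; apply: ereal_sup_ubound; exists h' => // x.
have := hf x; rewrite /patch /h' /=; case: ifPn => _ hx.
  by rewrite -(@lee_pmul2l _ k%:E) ?lte_fin// -EFinM mulrA mulfV ?mul1r.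
have -> : (point : \bar R) = 0 by [].
have h0 : (h x = 0)%R by apply/eqP; rewrite eq_le -lee_fin hx /= fun_ge0.
by rewrite h0 mulr0.
Qed.

Lemma G3 (D : set T) (a : T -> R) (B : T -> \bar R) : measurable D ->
  measurable_fun D a -> (forall x, D x -> (0 <= a x)%R) ->
  (forall x, D x -> 0 <= B x) ->
  \int[mu]_(x in D) ((a x)%:E + B x) <=
    \int[mu]_(x in D) (a x)%:E + \int[mu]_(x in D) B x.
Proof.
move=> mD ma a0 B0.
have aB0 x : D x -> 0 <= (a x)%:E + B x by move=> Dx; rewrite adde_ge0 ?lee_fin ?a0 ?B0.
rewrite (ge0_integralE mu aB0).
apply: ge_ereal_sup => _ [h hf <-].
pose h1 x := Num.min (h x) (a x).
pose h2 x := (h x - h1 x)%R.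
have mh : measurable_fun D h by apply: measurable_funTS.
have mh1 : measurable_fun D h1 by apply: measurable_minr.
have mh2 : measurable_fun D h2 by apply: measurable_funB.
have hpos x : (0 <= h x)%R by apply: fun_ge0.
have -> : sintegral mu h = \int[mu]_(x in D) ((h1 x)%:E + (h2 x)%:E).
  rewrite -integralT_nnsfun [RHS]integral_mkcond; apply: eq_integral => x _.
  rewrite /patch /h2; case: ifPn => Dx; first by rewrite -EFinD addrC subrK.
  have := hf x; rewrite /patch (negbTE Dx) => hx.
  have -> : (point : \bar R) = 0 by [].
  by apply/eqP; rewrite eq_le [0%E <= _]lee_fin hpos andbT; exact: hx.
have h10 x : D x -> (0 <= h1 x)%R by move=> Dx; rewrite /h1 le_min hpos a0.
have h20 x : D x -> (0 <= h2 x)%R by move=> Dx; rewrite /h2 subr_ge0 /h1 ge_min lexx.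
rewrite ge0_integralD//; last 2 first.
- exact/measurable_EFinP.
- exact/measurable_EFinP.
apply: leeD; apply: G1 => x Dx.
- by rewrite lee_fin h10.
- by rewrite lee_fin /h1 ge_min lexx orbT.
- by rewrite lee_fin h20.
have := hf x; rewrite /patch; case: ifPn => [_|]; last by rewrite notin_setE.
move=> hx.
rewrite /h2 /h1; case: (leP (h x) (a x)) => hax.
  by rewrite subrr B0.
by rewrite EFinB leeBlDl.
Qed.

End Gen.

Section W.
Variables (R : realType) (d : nat) (nuF : R).
Hypothesis hnu : 1 <= nuF.
Local Notation rs := (rseq R d).
Local Notation wn := (wnorm nuF).

Lemma omega_gt0 (k : midx d) : 0 < omega nuF k.
Proof.
rewrite /omega mulr_gt0//.
  by apply: prodr_gt0 => i _; case: ifP.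
by apply: exprn_gt0; apply: lt_le_trans hnu.
Qed.

Lemma omega_ge0 (k : midx d) : 0 <= omega nuF k.
Proof. exact/ltW/omega_gt0. Qed.

Lemma tge0 (a : rs) (k : midx d) : (0 <= (`|a k| * omega nuF k)%:E)%E.
Proof. by rewrite lee_fin mulr_ge0 ?omega_ge0. Qed.

Lemma wn_ge0 (a : rs) : (0 <= wn a)%E.
Proof. rewrite /wnorm; apply: esum_ge0 => k _; exact: tge0. Qed.

Lemma wn_term (a : rs) (k : midx d) : ((`|a k| * omega nuF k)%:E <= wn a)%E.
Proof.
apply: esum_ge; exists [set k]; first by split => //; exact: finite_set1.
by rewrite fsbig_set1.
Qed.

Lemma wn_le (a b : rs) : (forall k, `|a k| <= `|b k|) -> (wn a <= wn b)%E.
Proof.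
move=> h; apply: le_esum => k _; rewrite lee_fin ler_wpM2r ?omega_ge0//.
Qed.

Lemma wn_add (a b : rs) : (wn (sadd a b) <= wn a + wn b)%E.
Proof.
rewrite /wnorm -esumD; last 2 first.
- by move=> k _; exact: tge0.
- by move=> k _; exact: tge0.
apply: le_esum => k _; rewrite -EFinD lee_fin -mulrDl ler_wpM2r ?omega_ge0//.
exact: ler_normD.
Qed.

Lemma wn_Pim (m : midx d) (a : rs) : (wn (Pim m a) <= wn a)%E.
Proof. by apply: wn_le => k; rewrite /Pim; case: ifP; rewrite ?normr0. Qed.

Lemma wn_Piinf (m : midx d) (a : rs) : (wn (Piinf m a) <= wn a)%E.
Proof. by apply: wn_le => k; rewrite /Piinf; case: ifP; rewrite ?normr0. Qed.

Lemma split_P (m : midx d) (a : rs) : a = sadd (Pim m a) (Piinf m a).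
Proof.
by apply/funext => k; rewrite /sadd /Pim /Piinf; case: ifP; rewrite ?addr0 ?add0r.
Qed.

Lemma wn_split (m : midx d) (a : rs) : (wn a <= wn (Pim m a) + wn (Piinf m a))%E.
Proof. by rewrite {1}(split_P m a); apply: wn_add. Qed.

Lemma wn_scale c (a : rs) : (wn (sscale c a) <= `|c|%:E * wn a)%E.
Proof.
rewrite {1}/wnorm; apply: ge_ereal_sup => _ [F [finF _] <-].
rewrite (eq_fsbigr (fun k => (`|c|%:E * (`|a k| * omega nuF k)%:E)%E)); last first.
  by move=> k _; rewrite -EFinM /sscale normrM -mulrA.
rewrite -(@ge0_mule_fsumr _ _ `|c|%:E (fun k => (`|a k| * omega nuF k)%:E) F); last by move=> k; exact: tge0.
rewrite lee_wpmul2l ?lee_fin//; apply: ereal_sup_ubound; exists F => //.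
Qed.

Lemma wn_eq0 (a : rs) : wn a = 0%E -> a = (fun _ => 0).
Proof.
move=> h; apply/funext => k; have := wn_term a k; rewrite h lee_fin.
rewrite pmulr_lle0 ?omega_gt0// => h0.
by apply/eqP; rewrite -normr_eq0 eq_le h0 normr_ge0.
Qed.


Lemma abs_fine_le (x : \bar R) : (`|fine x|%:E <= `|x|)%E.
Proof. by case: x => [r| |] //=; rewrite normr0 ?leey ?lee_fin. Qed.

Lemma wn_vint (s t : R) (f : R -> rs) :
  (forall k, measurable_fun `]s, t[ (fun r => f r k)) ->
  (wn (vint s t f) <= \int[leb]_(r in `]s, t[) wn (f r))%E.
Proof.
move=> mf; rewrite {1}/wnorm; apply: ge_ereal_sup => _ [F [finF _] <-].
have mD : measurable (`]s, t[ : set R) by exact: measurable_itv.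
have mg k : measurable_fun `]s, t[ (fun r => (`|f r k| * omega nuF k)%:E).
  apply/measurable_EFinP; apply: measurable_funM => //.
  exact: measurableT_comp.
apply: (@le_trans _ _ (\sum_(k \in F)
   \int[leb]_(r in `]s, t[) (`|f r k| * omega nuF k)%:E)%E).
  apply: lee_fsum => // k _.
  under eq_integral => r _ do rewrite mulrC EFinM (_ : (`|f r k|)%:E = `|(f r k)%:E|%E)//.
  rewrite ge0_integralZl_EFin; last 4 first.
  - exact: mD.
  - by move=> r _; exact: abse_ge0.
  - exact: (measurableT_comp (@abse_measurable R setT) ((measurable_EFinP _ _).2 (mf k))).
  - exact: omega_ge0.
  rewrite EFinM muleC lee_wpmul2l ?lee_fin ?omega_ge0//.
  rewrite /vint /Rintegral; apply: le_trans (abs_fine_le _) _; apply: le_abse_integral => //.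
  exact: ((measurable_EFinP _ _).2 (mf k)).
rewrite -ge0_integral_fsum//; last by move=> k r _; exact: tge0.
apply: G1 => r _; first by apply: fsume_ge0 => k _; exact: tge0.
by apply: ereal_sup_ubound; exists F.
Qed.

Lemma wn0 : wn (fun _ : midx d => 0) = 0%E.
Proof. by rewrite /wnorm esum1// => k _; rewrite normr0 mul0r. Qed.

Lemma inl1_0 : inl1 nuF (fun _ : midx d => 0 : R).
Proof. by rewrite /inl1 wn0 ltey. Qed.

Lemma wn_fin (x : rs) : inl1 nuF x -> wn x = (fine (wn x))%:E.
Proof.
move=> h; rewrite fineK// ge0_fin_numE//; exact: wn_ge0.
Qed.

Lemma inl1_le (x y : rs) : (wn x <= wn y)%E -> inl1 nuF y -> inl1 nuF x.
Proof. by move=> h; rewrite /inl1; apply: le_lt_trans. Qed.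

Lemma op_bd (T : rs -> rs) (E : R) (x : rs) :
  (forall c y, inl1 nuF y -> T (sscale c y) = sscale c (T y)) ->
  (opnorm nuF T <= E%:E)%E -> (0 <= E) -> inl1 nuF x ->
  (wn (T x) <= E%:E * wn x)%E.
Proof.
move=> lin hE E0 hx.
have [x0|xn0] := eqVneq (wn x) 0%E.
  have xe : x = sscale 0 x by rewrite (wn_eq0 _ x0); apply/funext => k; rewrite /sscale mul0r.
  rewrite x0 mule0 xe lin //; apply: le_trans (wn_scale _ _) _.
  by rewrite normr0 mul0e.
set c := fine (wn x).
have cx : wn x = c%:E by exact: wn_fin.
have c0 : 0 < c.
  by rewrite lt0r -lee_fin -cx wn_ge0 andbT; apply: contra xn0; rewrite cx => /eqP ->.
pose x' := sscale c^-1 x.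
have hx' : (wn x' <= 1)%E.
  apply: le_trans (wn_scale _ _) _.
  by rewrite cx -EFinM ger0_norm ?invr_ge0 ?(ltW c0)// mulVf ?gt_eqF.
have hT : (wn (T x') <= E%:E)%E.
  by apply: le_trans hE; apply: ereal_sup_ubound; exists x'.
have -> : T x = sscale c (T x').
  by rewrite /x' lin//; apply/funext => k; rewrite /sscale mulrA mulfV ?gt_eqF// mul1r.
apply: le_trans (wn_scale _ _) _.
rewrite cx ger0_norm ?(ltW c0)// muleC lee_wpmul2r ?lee_fin ?(ltW c0)//.
Qed.

Lemma lin_zero (T : rs -> rs) :
  (forall c x y, inl1 nuF x -> inl1 nuF y ->
     T (sadd (sscale c x) y) = sadd (sscale c (T x)) (T y)) ->
  T (fun _ => 0) = (fun _ => 0).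
Proof.
move=> lin; have h := lin 1 _ _ inl1_0 inl1_0.
have e0 : sadd (sscale 1 (fun _ : midx d => 0 : R)) (fun _ => 0) = (fun _ => 0 : R).
  by apply/funext => k; rewrite /sadd /sscale mulr0 addr0.
rewrite e0 in h; apply/funext => k.
have := congr1 (fun f => f k) h; rewrite /sadd /sscale mul1r => e.
lra.
Qed.

Lemma lin_scale (T : rs -> rs) :
  (forall c x y, inl1 nuF x -> inl1 nuF y ->
     T (sadd (sscale c x) y) = sadd (sscale c (T x)) (T y)) ->
  forall c y, inl1 nuF y -> T (sscale c y) = sscale c (T y).
Proof.
move=> lin c y hy; have := lin c _ _ hy inl1_0; rewrite (@lin_zero T lin).
have -> : sadd (sscale c y) (fun _ => 0) = sscale c y.
  by apply/funext => k; rewrite /sadd addr0.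
move=> ->; apply/funext => k; by rewrite /sadd addr0.
Qed.

Lemma wn_split_eq (m : midx d) (a : rs) : (wn (Pim m a) + wn (Piinf m a) = wn a)%E.
Proof.
rewrite /wnorm -esumD; last 2 first.
- by move=> k _; exact: tge0.
- by move=> k _; exact: tge0.
apply: eq_esum => k _; rewrite -EFinD -mulrDl /Pim /Piinf.
by case: ifP; rewrite normr0 ?addr0 ?add0r.
Qed.

End W.

Lemma fin_of_bd (R : realType) (g B : R) (x : \bar R) : 0 < g -> (0 <= x)%E ->
  (g%:E * x <= B%:E)%E -> x = (fine x)%:E /\ g * fine x <= B.
Proof.
case: x => [r| |] //= g0 _ h; exfalso.
by move: h; rewrite muleC gt0_mulye ?lte_fin// leye_eq.
Qed.


Lemma mS_meas (R : realType) (tau : R) :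
  measurable [set p : R * R | 0 < p.2 < p.1 /\ p.1 <= tau].
Proof.
have -> : [set p : R * R | 0 < p.2 < p.1 /\ p.1 <= tau] =
   (snd @^-1` `]0, +oo[) `&` ((fun p : R * R => p.1 - p.2) @^-1` `]0, +oo[)
   `&` (fst @^-1` `]-oo, tau]).
  apply/seteqP; split => [[x y]|[x y]] /=; rewrite !in_itv /= ?andbT ?subr_gt0.
    by move=> [/andP[-> ->] ->].
  by move=> [[-> ->] ->].
apply: measurableI; first apply: measurableI.
- by rewrite -[X in measurable X]setTI; apply: measurable_snd => //; exact: measurable_itv.
- rewrite -[X in measurable X]setTI.
  by apply: (measurable_funB measurable_fst measurable_snd) => //; exact: measurable_itv.
- by rewrite -[X in measurable X]setTI; apply: measurable_fst => //; exact: measurable_itv.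
Qed.

Lemma sec_meas (R : realType) (W : R -> R -> R) (tau : R) :
  measurable_fun [set p : R * R | 0 < p.2 < p.1 /\ p.1 <= tau] (fun p : R * R => W p.1 p.2) ->
  (forall s t, 0 < s -> t <= tau -> measurable_fun `]s, t[ (fun r => W r s)) /\
  (forall s t, 0 < s -> t <= tau -> measurable_fun `]s, t[ (fun r => W t r)).
Proof.
move=> mW; split => s t s0 ttau.
  have h : measurable_fun `]s, t[ ((fun p : R * R => W p.1 p.2) \o pair^~ s).
    apply: (measurable_comp _ _ mW).
    - exact: mS_meas.
    - move=> _ [r + <-]; rewrite /= in_itv /= => /andP[sr rt].
      by rewrite s0 sr /=; split => //; apply: ltW; apply: lt_le_trans ttau.
    - exact: measurable_funTS.
  exact: h.
have h : measurable_fun `]s, t[ ((fun p : R * R => W p.1 p.2) \o pair t).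
  apply: (measurable_comp _ _ mW).
  - exact: mS_meas.
  - move=> _ [r + <-]; rewrite /= in_itv /= => /andP[sr rt].
    by rewrite (lt_trans s0 sr) rt /=.
  - exact: measurable_funTS.
exact: h.
Qed.

Lemma mx_bd (R : realType) (a b c e : R) : 0 <= a -> 0 <= b -> 0 <= c -> 0 <= e ->
  a + c <= mxnorm1 (\matrix_(i < 2, j < 2) nth 0 (nth [::] [:: [:: a; b]; [:: c; e]] i) j) /\
  b + e <= mxnorm1 (\matrix_(i < 2, j < 2) nth 0 (nth [::] [:: [:: a; b]; [:: c; e]] i) j).
Proof.
move=> a0 b0 c0 e0.
rewrite /mxnorm1 !big_ord_recl !big_ord0 !mxE /= !addr0 !ger0_norm //.
by split; rewrite !le_max lexx ?orbT.
Qed.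

Theorem mainTheorem1
  (R : realType) (d : nat) (L : 'I_d -> R) (nuF : R)
  (l0 l1 l2 : R) (q : nat) (tau : R)
  (N : rseq R d -> rseq R d) (DN : rseq R d -> rseq R d -> rseq R d)
  (abar : R -> rseq R d)
  (U Ubm Ubi : R -> R -> rseq R d -> rseq R d)
  (m : midx d) (gamma : R)
  (W : R -> R -> R) (Wmq Winfq Wbar Wbbar Emi Eim : R)
  (* standing setting *)
  (hd : (1 <= d)%N) (hL : forall i, 0 < L i) (hnu : 1 <= nuF)
  (hq : q = 0%N \/ q = 2%N) (htau : 0 < tau)
  (hN : frechet_deriv nuF N DN) (hN0 : N (fun _ => 0) = (fun _ => 0))
  (hDN0 : forall h, inl1 nuF h -> DN (fun _ => 0) h = (fun _ => 0))
  (habar_l1 : forall t, 0 < t <= tau -> inl1 nuF (abar t))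
  (habar_cont : forall t0, 0 < t0 <= tau -> forall eps : R, 0 < eps ->
      exists delta : R, 0 < delta /\ forall t, 0 < t <= tau -> `|t - t0| < delta ->
        (wnorm nuF (ssub (abar t) (abar t0)) < eps%:E)%E)
  (habar_bd : exists C : R, forall t, 0 < t <= tau -> (wnorm nuF (abar t) <= C%:E)%E)
  (* hypotheses on m *)
  (hmu : forall k, ~~ in_Fm m k -> mu L l0 l1 l2 k < 0)
  (hmustar : exists k0, ~~ in_Fm m k0 /\
      forall k, ~~ in_Fm m k -> mu L l0 l1 l2 k <= mu L l0 l1 l2 k0)
  (* gamma *)
  (hgamma : 0 <= gamma < 1) (hgamma2 : q = 2%N -> 0 < gamma)
  (* (i) *)
  (hWmq : 0 < Wmq)
  (hi : forall t s psi, 0 < s < t -> t <= tau -> inl1 nuF psi ->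
      (wnorm nuF (Ubm t s (Qop L q (Pim m psi))) <= Wmq%:E * wnorm nuF (Pim m psi))%E)
  (* (ii) *)
  (hW0 : forall t s, 0 < s < t -> t <= tau -> 0 <= W t s)
  (hWmeas : measurable_fun [set p : R * R | 0 < p.2 < p.1 /\ p.1 <= tau]
              (fun p : R * R => W p.1 p.2))
  (hii : forall t s psi, 0 < s < t -> t <= tau -> inl1 nuF psi ->
      (wnorm nuF (Ubi t s (Qop L q (Piinf m psi))) <= (W t s)%:E * wnorm nuF (Piinf m psi))%E)
  (* (iii) *)
  (hWinfq : 0 < Winfq) (hWbar : 0 <= Wbar) (hWbbar : 0 <= Wbbar)
  (hiii1 : forall t s, 0 < s < t -> t <= tau -> (t - s) `^ gamma * W t s <= Winfq)
  (hiii2a : forall t s, 0 < s < t -> t <= tau ->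
      (((t - s) `^ gamma)%:E * \int[leb]_(r in `]s, t[) (W r s)%:E <= Wbar%:E)%E)
  (hiii2b : forall t s, 0 < s < t -> t <= tau ->
      (((t - s) `^ gamma)%:E * \int[leb]_(r in `]s, t[) (W t r)%:E <= Wbar%:E)%E)
  (hiii3a : forall t s, 0 < s < t -> t <= tau ->
      (((t - s) `^ gamma)%:E *
         \int[leb]_(r in `]s, t[) \int[leb]_(sg in `]s, r[)
            (W r sg * (sg - s) `^ (- gamma))%:E <= Wbbar%:E)%E)
  (hiii3b : forall t s, 0 < s < t -> t <= tau ->
      (((t - s) `^ gamma)%:E *
         \int[leb]_(r in `]s, t[) ((W t r)%:E *
            \int[leb]_(sg in `]s, r[) ((sg - s) `^ (- gamma))%:E) <= Wbbar%:E)%E)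
  (* (iv) *)
  (hEmi : 0 <= Emi) (hEim : 0 <= Eim)
  (hiv1 : forall t, 0 < t <= tau ->
      (opnorm nuF (fun phi => Pim m (DN (abar t) (Piinf m phi))) <= Emi%:E)%E)
  (hiv2 : forall t, 0 < t <= tau ->
      (opnorm nuF (fun phi => Piinf m (DN (abar t) (Pim m phi))) <= Eim%:E)%E)
  (* (v) *)
  (hv : forall s psi, 0 <= s < tau -> inl1 nuF psi ->
      let b := fun t => U t s (Qop L q psi) in
      (forall t, s < t <= tau -> inl1 nuF (b t)) /\
      (forall t0, s < t0 <= tau -> forall eps : R, 0 < eps ->
         exists delta : R, 0 < delta /\ forall t, s < t <= tau -> `|t - t0| < delta ->
           (wnorm nuF (ssub (b t) (b t0)) < eps%:E)%E) /\
      (exists C : R, forall t, s < t <= tau ->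
         (((t - s) `^ gamma)%:E * wnorm nuF (b t) <= C%:E)%E) /\
      (forall t, s < t <= tau ->
         let fm := fun r => Ubm t r (Pim m (Qop L q (DN (abar r) (Piinf m (b r))))) in
         let fi := fun r => Ubi t r (Piinf m (Qop L q (DN (abar r) (Pim m (b r))))) in
         bochner_integrable nuF s t fm /\ bochner_integrable nuF s t fi /\
         Pim m (b t) = sadd (Ubm t s (Qop L q (Pim m psi))) (vint s t fm) /\
         Piinf m (b t) = sadd (Ubi t s (Qop L q (Piinf m psi))) (vint s t fi)))
  (* smallness condition *)
  (hkappa : 0 < 1 - Wmq * Wbbar * Emi * Eim) :
  let kappa := 1 - Wmq * Wbbar * Emi * Eim in
  let Wq := kappa^-1 * mxnorm1 (\matrix_(i < 2, j < 2)
              nth 0 (nth [::] [:: [:: tau `^ gamma * Wmq; Wmq * Wbar * Emi];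
                                  [:: Wmq * Wbar * Eim; Winfq]] i) j) in
  forall t s psi, 0 < s < t -> t <= tau -> inl1 nuF psi ->
    (((t - s) `^ gamma)%:E * wnorm nuF (U t s (Qop L q psi)) <= Wq%:E * wnorm nuF psi)%E.
Proof.
move=> kappa Wq t s psi /andP[s0 st] ttau hpsi.
pose b r := U r s (Qop L q psi).
have hs : 0 <= s < tau by rewrite (ltW s0) /= (lt_le_trans st ttau).
have [hb1 [_ [[C hC] hbeq]]] := hv s psi hs hpsi.
have PimQ y : Pim m (Qop L q y) = Qop L q (Pim m y).
  by apply/funext => k; rewrite /Pim /Qop; case: ifP; rewrite ?mulr0.
have PiinfQ y : Piinf m (Qop L q y) = Qop L q (Piinf m y).
  by apply/funext => k; rewrite /Piinf /Qop; case: ifP; rewrite ?mulr0.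
have PimPim y : Pim m (Pim m y) = Pim m y.
  by apply/funext => k; rewrite /Pim; case: (in_Fm m k).
have PiinfPiinf y : Piinf m (Piinf m y) = Piinf m y.
  by apply/funext => k; rewrite /Piinf; case: (in_Fm m k).
have PimS c y : Pim m (sscale c y) = sscale c (Pim m y).
  by apply/funext => k; rewrite /Pim /sscale; case: ifP; rewrite ?mulr0.
have PiinfS c y : Piinf m (sscale c y) = sscale c (Piinf m y).
  by apply/funext => k; rewrite /Piinf /sscale; case: ifP; rewrite ?mulr0.
have inl1Pim y : inl1 nuF y -> inl1 nuF (Pim m y).
  by apply: inl1_le; exact: wn_Pim.
have inl1Piinf y : inl1 nuF y -> inl1 nuF (Piinf m y).
  by apply: inl1_le; exact: wn_Piinf.
have hDN r : 0 < r <= tau -> bounded_linear nuF (DN (abar r)).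
  by move=> hr; exact: ((hN.2 (abar r) (habar_l1 r hr)).1).
have DNl1 r y : 0 < r <= tau -> inl1 nuF y -> inl1 nuF (DN (abar r) y).
  by move=> hr; exact: (hDN r hr).1.
have DNS r c y : 0 < r <= tau -> inl1 nuF y -> DN (abar r) (sscale c y) = sscale c (DN (abar r) y).
  by move=> hr; apply: lin_scale; exact: (hDN r hr).2.1.
have OP1 r y : 0 < r <= tau -> inl1 nuF y ->
    (wnorm nuF (Pim m (DN (abar r) (Piinf m y))) <= Emi%:E * wnorm nuF (Piinf m y))%E.
  move=> hr hy.
  have := @op_bd R d nuF hnu (fun phi => Pim m (DN (abar r) (Piinf m phi))) Emi (Piinf m y)
    _ (hiv1 r hr) hEmi (inl1Piinf _ hy).
  rewrite PiinfPiinf; apply => c z hz /=.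
  by rewrite PiinfS DNS ?PimS //; exact: inl1Piinf.
have OP2 r y : 0 < r <= tau -> inl1 nuF y ->
    (wnorm nuF (Piinf m (DN (abar r) (Pim m y))) <= Eim%:E * wnorm nuF (Pim m y))%E.
  move=> hr hy.
  have := @op_bd R d nuF hnu (fun phi => Piinf m (DN (abar r) (Pim m phi))) Eim (Pim m y)
    _ (hiv2 r hr) hEim (inl1Pim _ hy).
  rewrite PimPim; apply => c z hz /=.
  by rewrite PimS DNS ?PiinfS //; exact: inl1Pim.
have hbl1 r : s < r <= tau -> inl1 nuF (b r) by move=> hr; exact: hb1.
have FM t' r : s < r < t' -> t' <= tau ->
    (wnorm nuF (Ubm t' r (Pim m (Qop L q (DN (abar r) (Piinf m (b r)))))) <=
      (Wmq * Emi)%:E * wnorm nuF (Piinf m (b r)))%E.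
  move=> /andP[sr rt] ht.
  have hr : 0 < r <= tau by rewrite (lt_trans s0 sr) /= ltW// (lt_le_trans rt ht).
  have hbr : inl1 nuF (b r) by apply: hbl1; rewrite sr /= ltW// (lt_le_trans rt ht).
  rewrite PimQ; apply: le_trans (hi t' r _ _ ht (DNl1 r _ hr (inl1Piinf _ hbr))) _.
    by rewrite (lt_trans s0 sr) rt.
  rewrite EFinM -muleA lee_wpmul2l ?lee_fin ?(ltW hWmq)//; exact: OP1.
have FI t' r : s < r < t' -> t' <= tau ->
    (wnorm nuF (Ubi t' r (Piinf m (Qop L q (DN (abar r) (Pim m (b r)))))) <=
      (W t' r * Eim)%:E * wnorm nuF (Pim m (b r)))%E.
  move=> /andP[sr rt] ht.
  have hr : 0 < r <= tau by rewrite (lt_trans s0 sr) /= ltW// (lt_le_trans rt ht).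
  have hbr : inl1 nuF (b r) by apply: hbl1; rewrite sr /= ltW// (lt_le_trans rt ht).
  have hrt : 0 < r < t' by rewrite (lt_trans s0 sr) rt.
  rewrite PiinfQ; apply: le_trans (hii t' r _ hrt ht (DNl1 r _ hr (inl1Pim _ hbr))) _.
  rewrite EFinM -muleA lee_wpmul2l ?lee_fin ?hW0//; exact: OP2.
have EQM t' : s < t' <= tau ->
    (wnorm nuF (Pim m (b t')) <= Wmq%:E * wnorm nuF (Pim m psi) +
      \int[leb]_(r in `]s, t'[)
         wnorm nuF (Ubm t' r (Pim m (Qop L q (DN (abar r) (Piinf m (b r)))))))%E.
  move=> ht; have [bfm [bfi [eqm eqi]]] := hbeq t' ht.
  have /andP[st' t'tau] := ht.
  rewrite /b eqm; apply: le_trans (@wn_add _ _ _ hnu _ _) _; apply: leeD.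
    by apply: hi => //; rewrite s0.
  exact: (@wn_vint _ _ _ hnu _ _ _ bfm.1).
have EQI t' : s < t' <= tau ->
    (wnorm nuF (Piinf m (b t')) <= (W t' s)%:E * wnorm nuF (Piinf m psi) +
      \int[leb]_(r in `]s, t'[)
         wnorm nuF (Ubi t' r (Piinf m (Qop L q (DN (abar r) (Pim m (b r)))))))%E.
  move=> ht; have [bfm [bfi [eqm eqi]]] := hbeq t' ht.
  have /andP[st' t'tau] := ht.
  rewrite /b eqi; apply: le_trans (@wn_add _ _ _ hnu _ _) _; apply: leeD.
    by apply: hii => //; rewrite s0.
  exact: (@wn_vint _ _ _ hnu _ _ _ bfi.1).
pose nm r := fine (wnorm nuF (Pim m (b r))).
pose ni r := fine (wnorm nuF (Piinf m (b r))).
have nmE r : s < r <= tau -> wnorm nuF (Pim m (b r)) = (nm r)%:E.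
  by move=> hr; apply: (@wn_fin _ _ _ hnu); apply: inl1Pim; exact: hbl1.
have niE r : s < r <= tau -> wnorm nuF (Piinf m (b r)) = (ni r)%:E.
  by move=> hr; apply: (@wn_fin _ _ _ hnu); apply: inl1Piinf; exact: hbl1.
have nm0 r : 0 <= nm r by apply: fine_ge0; exact: (@wn_ge0 _ _ _ hnu).
have ni0 r : 0 <= ni r by apply: fine_ge0; exact: (@wn_ge0 _ _ _ hnu).
pose pm := fine (wnorm nuF (Pim m psi)).
pose pi := fine (wnorm nuF (Piinf m psi)).
have pmE : wnorm nuF (Pim m psi) = pm%:E by apply: (@wn_fin _ _ _ hnu); exact: inl1Pim.
have piE : wnorm nuF (Piinf m psi) = pi%:E by apply: (@wn_fin _ _ _ hnu); exact: inl1Piinf.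
have pm0 : 0 <= pm by apply: fine_ge0; exact: (@wn_ge0 _ _ _ hnu).
have pi0 : 0 <= pi by apply: fine_ge0; exact: (@wn_ge0 _ _ _ hnu).
have bC t' : s < t' <= tau -> (t' - s) `^ gamma * nm t' <= C /\ (t' - s) `^ gamma * ni t' <= C.
  move=> ht; have h := hC t' ht.
  have g0 : (0 <= ((t' - s) `^ gamma)%:E)%E by rewrite lee_fin powR_ge0.
  split; rewrite -lee_fin EFinM.
    rewrite -(nmE _ ht); apply: le_trans h; apply: lee_wpmul2l => //.
    exact: (@wn_Pim _ _ _ hnu).
  rewrite -(niE _ ht); apply: le_trans h; apply: lee_wpmul2l => //.
  exact: (@wn_Piinf _ _ _ hnu).
have tauin : s < tau <= tau by rewrite lexx andbT (lt_le_trans st ttau).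
pose Sx := [set x | exists2 t', s < t' <= tau & x = (t' - s) `^ gamma * nm t'].
pose Sy := [set x | exists2 t', s < t' <= tau & x = (t' - s) `^ gamma * ni t'].
have hSx : has_sup Sx.
  split; first by exists ((tau - s) `^ gamma * nm tau); exists tau.
  by exists C => x [t' ht ->]; exact: (bC t' ht).1.
have hSy : has_sup Sy.
  split; first by exists ((tau - s) `^ gamma * ni tau); exists tau.
  by exists C => x [t' ht ->]; exact: (bC t' ht).2.
pose X := sup Sx.
pose Y := sup Sy.
have hX t' : s < t' <= tau -> (t' - s) `^ gamma * nm t' <= X.
  by move=> ht; apply: sup_upper_bound => //; exists t'.
have hY t' : s < t' <= tau -> (t' - s) `^ gamma * ni t' <= Y.
  by move=> ht; apply: sup_upper_bound => //; exists t'.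
have X0 : 0 <= X by apply: le_trans (hX _ tauin); rewrite mulr_ge0 ?powR_ge0.
have Y0 : 0 <= Y by apply: le_trans (hY _ tauin); rewrite mulr_ge0 ?powR_ge0.
have nmX r : s < r <= tau -> nm r <= X * (r - s) `^ (- gamma).
  move=> hr; have /andP[sr _] := hr.
  have gp : 0 < (r - s) `^ gamma by apply: powR_gt0; rewrite subr_gt0.
  by rewrite powRN ler_pdivlMr // mulrC; exact: hX.
have niY r : s < r <= tau -> ni r <= Y * (r - s) `^ (- gamma).
  move=> hr; have /andP[sr _] := hr.
  have gp : 0 < (r - s) `^ gamma by apply: powR_gt0; rewrite subr_gt0.
  by rewrite powRN ler_pdivlMr // mulrC; exact: hY.
have [SEC1 SEC2] := @sec_meas R W tau hWmeas.
have Eim0 : 0 <= Eim := hEim.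
have Emi0 : 0 <= Emi := hEmi.
have Wmq0 : 0 <= Wmq := ltW hWmq.
have CX t' : s < t' <= tau -> (t' - s) `^ gamma * nm t' <=
    tau `^ gamma * Wmq * pm + Wmq * Emi * pi * Wbar + Wmq * Emi * Eim * X * Wbbar.
  move=> ht; have /andP[st' t'tau] := ht.
  have hIr r : s < r < t' -> (wnorm nuF (Piinf m (b r)) <= (W r s * pi)%:E +
      (Eim * X)%:E * \int[leb]_(sg in `]s, r[) (W r sg * (sg - s) `^ (- gamma))%:E)%E.
    move=> /andP[sr rt]; have rtau : r <= tau by apply: ltW; apply: (lt_le_trans rt t'tau).
    have hr : s < r <= tau by rewrite sr rtau.
    apply: le_trans (EQI r hr) _; rewrite piE -EFinM; apply: leeD2l.
    apply: (@le_trans _ _ (\int[leb]_(sg in `]s, r[)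
       ((Eim * X)%:E * (W r sg * (sg - s) `^ (- gamma))%:E))%E).
      apply: G1 => sg.
        by move=> _; exact: (@wn_ge0 _ _ _ hnu).
      rewrite /= in_itv /= => /andP[ssg sgr].
      have hsg : s < sg <= tau by rewrite ssg /= ltW // (lt_trans sgr (lt_le_trans rt t'tau)).
      apply: le_trans (FI r sg _ rtau) _; first by rewrite ssg sgr.
      rewrite (nmE sg hsg) -EFinM lee_fin.
      have := nmX sg hsg; have : 0 <= W r sg * Eim.
        by rewrite mulr_ge0 // hW0 // (lt_trans s0 ssg) sgr.
      have := nm0 sg; have := powR_ge0 (sg - s) (- gamma).
      nra.
    apply: G2; first by rewrite mulr_ge0.
    move=> sg; rewrite /= in_itv /= => /andP[ssg sgr].
    by rewrite lee_fin mulr_ge0 ?powR_ge0 // hW0 // (lt_trans s0 ssg) sgr.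
  pose I r := (\int[leb]_(sg in `]s, r[) (W r sg * (sg - s) `^ (- gamma))%:E)%E.
  have I0 r : r <= tau -> (0 <= I r)%E.
    move=> rtau; apply: integral_ge0 => sg; rewrite /= in_itv /= => /andP[ssg sgr].
    by rewrite lee_fin mulr_ge0 ?powR_ge0 // hW0 // (lt_trans s0 ssg) sgr.
  have hJ : (\int[leb]_(r in `]s, t'[)
         wnorm nuF (Ubm t' r (Pim m (Qop L q (DN (abar r) (Piinf m (b r)))))) <=
      \int[leb]_(r in `]s, t'[) ((Wmq * Emi * (W r s * pi))%:E +
                                  (Wmq * Emi * (Eim * X))%:E * I r))%E.
    apply: G1 => r.
      by move=> _; exact: (@wn_ge0 _ _ _ hnu).
    rewrite /= in_itv /= => /andP[sr rt].
    apply: le_trans (FM t' r _ t'tau) _; first by rewrite sr rt.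
    apply: le_trans (lee_wpmul2l _ (hIr r _)) _.
    - by rewrite lee_fin mulr_ge0.
    - by rewrite sr rt.
    have W0 : 0 <= W r s by rewrite hW0 // ?s0 ?sr // ltW // (lt_le_trans rt t'tau).
    rewrite ge0_muleDr ?muleA -?EFinM //.
      by have := mulr_ge0 W0 pi0; rewrite -(@lee_fin R); apply: le_trans.
    apply: mule_ge0; [by rewrite lee_fin mulr_ge0 | apply: I0].
    by apply: ltW; apply: (lt_le_trans rt t'tau).
  have hJ2 : (\int[leb]_(r in `]s, t'[) ((Wmq * Emi * (W r s * pi))%:E +
                                  (Wmq * Emi * (Eim * X))%:E * I r) <=
      (Wmq * Emi * pi)%:E * \int[leb]_(r in `]s, t'[) (W r s)%:E +
      (Wmq * Emi * (Eim * X))%:E * \int[leb]_(r in `]s, t'[) I r)%E.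
    apply: le_trans (@G3 _ _ _ leb `]s, t'[ (fun r => Wmq * Emi * (W r s * pi))
        (fun r => (Wmq * Emi * (Eim * X))%:E * I r)%E _ _ _ _) _.
    - exact: measurable_itv.
    - apply: measurable_funM; first exact: measurable_cst.
      apply: measurable_funM; last exact: measurable_cst.
      exact: SEC1.
    - move=> r; rewrite /= in_itv /= => /andP[sr rt].
      by rewrite !mulr_ge0 // hW0 // ?s0 ?sr // ltW // (lt_le_trans rt t'tau).
    - move=> r; rewrite /= in_itv /= => /andP[sr rt].
      apply: mule_ge0; [by rewrite lee_fin !mulr_ge0 | apply: I0].
      by apply: ltW; apply: (lt_le_trans rt t'tau).
    apply: leeD.
      have -> : (\int[leb]_(r in `]s, t'[) (Wmq * Emi * (W r s * pi))%:E =
          \int[leb]_(r in `]s, t'[) ((Wmq * Emi * pi)%:E * (W r s)%:E))%E.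
        by apply: eq_integral => r _; rewrite -EFinM; congr EFin; ring.
      apply: G2; first by rewrite !mulr_ge0.
      move=> r; rewrite /= in_itv /= => /andP[sr rt].
      by rewrite lee_fin hW0 // ?s0 ?sr // ltW // (lt_le_trans rt t'tau).
    apply: G2; first by rewrite !mulr_ge0.
    move=> r; rewrite /= in_itv /= => /andP[sr rt]; apply: I0.
    by apply: ltW; apply: (lt_le_trans rt t'tau).
  have g0 : 0 < (t' - s) `^ gamma by apply: powR_gt0; rewrite subr_gt0.
  have st'' : 0 < s < t' by rewrite s0 st'.
  have IW0 : (0 <= \int[leb]_(r in `]s, t'[) (W r s)%:E)%E.
    apply: integral_ge0 => r; rewrite /= in_itv /= => /andP[sr rt].
    by rewrite lee_fin hW0 // ?s0 ?sr // ltW // (lt_le_trans rt t'tau).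
  have II0 : (0 <= \int[leb]_(r in `]s, t'[) I r)%E.
    apply: integral_ge0 => r; rewrite /= in_itv /= => /andP[sr rt]; apply: I0.
    by apply: ltW; apply: (lt_le_trans rt t'tau).
  have [IWE gIW] := @fin_of_bd R _ _ _ g0 IW0 (hiii2a t' s st'' t'tau).
  have [IIE gII] := @fin_of_bd R _ _ _ g0 II0 (hiii3a t' s st'' t'tau).
  pose IWr := fine (\int[leb]_(r in `]s, t'[) (W r s)%:E)%E.
  pose IIr := fine (\int[leb]_(r in `]s, t'[) I r)%E.
  have IWE' : (\int[leb]_(r in `]s, t'[) (W r s)%:E)%E = IWr%:E := IWE.
  have IIE' : (\int[leb]_(r in `]s, t'[) I r)%E = IIr%:E := IIE.
  have gIW' : (t' - s) `^ gamma * IWr <= Wbar := gIW.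
  have gII' : (t' - s) `^ gamma * IIr <= Wbbar := gII.
  have IWr0 : 0 <= IWr by rewrite -lee_fin -IWE'.
  have IIr0 : 0 <= IIr by rewrite -lee_fin -IIE'.
  have E1 : nm t' <= Wmq * pm + (Wmq * Emi * pi * IWr + Wmq * Emi * (Eim * X) * IIr).
    rewrite -lee_fin -(nmE _ ht); apply: le_trans (EQM t' ht) _; rewrite pmE EFinD EFinM.
    apply: leeD2l; apply: le_trans hJ _; apply: le_trans hJ2 _.
    by rewrite IWE' IIE' -!EFinM -EFinD.
  have gt : (t' - s) `^ gamma <= tau `^ gamma.
    apply: ge0_ler_powR; rewrite ?nnegrE ?subr_ge0 ?(ltW st') ?(ltW htau) //.
    - by case/andP: hgamma.
    - by rewrite lerBlDr ler_wpDr // ltW.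
  have : 0 <= Wmq * pm by rewrite mulr_ge0.
  have : 0 <= Wmq * Emi * pi by rewrite !mulr_ge0.
  have : 0 <= Wmq * Emi * (Eim * X) by rewrite !mulr_ge0.
  move: E1 gt gIW' gII' g0 (nm0 t'); nra.
have CY t' : s < t' <= tau -> (t' - s) `^ gamma * ni t' <=
    Winfq * pi + Eim * Wmq * Wbar * pm + Eim * Wmq * Emi * Y * Wbbar.
  move=> ht; have /andP[st' t'tau] := ht.
  pose J r := (\int[leb]_(sg in `]s, r[) ((sg - s) `^ (- gamma))%:E)%E.
  have J0 r : (0 <= J r)%E.
    by apply: integral_ge0 => sg _; rewrite lee_fin powR_ge0.
  have hJr r : s < r < t' -> (wnorm nuF (Pim m (b r)) <= (Wmq * pm)%:E +
      (Wmq * Emi * Y)%:E * J r)%E.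
    move=> /andP[sr rt]; have rtau : r <= tau by apply: ltW; apply: (lt_le_trans rt t'tau).
    have hr : s < r <= tau by rewrite sr rtau.
    apply: le_trans (EQM r hr) _; rewrite pmE -EFinM; apply: leeD2l.
    apply: (@le_trans _ _ (\int[leb]_(sg in `]s, r[)
       ((Wmq * Emi * Y)%:E * ((sg - s) `^ (- gamma))%:E))%E).
      apply: G1 => sg.
        by move=> _; exact: (@wn_ge0 _ _ _ hnu).
      rewrite /= in_itv /= => /andP[ssg sgr].
      have hsg : s < sg <= tau by rewrite ssg /= ltW // (lt_trans sgr (lt_le_trans rt t'tau)).
      apply: le_trans (FM r sg _ rtau) _; first by rewrite ssg sgr.
      rewrite (niE sg hsg) -!EFinM lee_fin.
      have := niY sg hsg; have : 0 <= Wmq * Emi by rewrite mulr_ge0.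
      have := ni0 sg; have := powR_ge0 (sg - s) (- gamma).
      nra.
    apply: G2; first by rewrite !mulr_ge0.
    by move=> sg _; rewrite lee_fin powR_ge0.
  have hK : (\int[leb]_(r in `]s, t'[)
         wnorm nuF (Ubi t' r (Piinf m (Qop L q (DN (abar r) (Pim m (b r)))))) <=
      \int[leb]_(r in `]s, t'[) ((W t' r * Eim * (Wmq * pm))%:E +
          (Eim * (Wmq * Emi * Y))%:E * ((W t' r)%:E * J r)))%E.
    apply: G1 => r.
      by move=> _; exact: (@wn_ge0 _ _ _ hnu).
    rewrite /= in_itv /= => /andP[sr rt].
    have W0 : 0 <= W t' r by rewrite hW0 // (lt_trans s0 sr) rt.
    apply: le_trans (FI t' r _ t'tau) _; first by rewrite sr rt.
    apply: le_trans (lee_wpmul2l _ (hJr r _)) _.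
    - by rewrite lee_fin mulr_ge0.
    - by rewrite sr rt.
    rewrite ge0_muleDr; last 2 first.
    - by have := mulr_ge0 Wmq0 pm0; rewrite -(@lee_fin R); apply: le_trans.
    - by apply: mule_ge0; [rewrite lee_fin !mulr_ge0 | exact: J0].
    rewrite -EFinM; apply: leeD2l.
    rewrite !muleA -!EFinM le_eqVlt; apply/orP; left; apply/eqP.
    by congr (_ * _)%E; congr EFin; ring.
  have hK2 : (\int[leb]_(r in `]s, t'[) ((W t' r * Eim * (Wmq * pm))%:E +
          (Eim * (Wmq * Emi * Y))%:E * ((W t' r)%:E * J r)) <=
      (Eim * (Wmq * pm))%:E * \int[leb]_(r in `]s, t'[) (W t' r)%:E +
      (Eim * (Wmq * Emi * Y))%:E * \int[leb]_(r in `]s, t'[) ((W t' r)%:E * J r))%E.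
    apply: le_trans (@G3 _ _ _ leb `]s, t'[ (fun r => W t' r * Eim * (Wmq * pm))
        (fun r => (Eim * (Wmq * Emi * Y))%:E * ((W t' r)%:E * J r))%E _ _ _ _) _.
    - exact: measurable_itv.
    - apply: measurable_funM; last exact: measurable_cst.
      apply: measurable_funM; last exact: measurable_cst.
      exact: SEC2.
    - move=> r; rewrite /= in_itv /= => /andP[sr rt].
      by rewrite !mulr_ge0 // hW0 // (lt_trans s0 sr) rt.
    - move=> r; rewrite /= in_itv /= => /andP[sr rt].
      have W0 : 0 <= W t' r by rewrite hW0 // (lt_trans s0 sr) rt.
      by apply: mule_ge0; [rewrite lee_fin !mulr_ge0 | apply: mule_ge0; rewrite ?lee_fin].
    apply: leeD.
      have -> : (\int[leb]_(r in `]s, t'[) (W t' r * Eim * (Wmq * pm))%:E =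
          \int[leb]_(r in `]s, t'[) ((Eim * (Wmq * pm))%:E * (W t' r)%:E))%E.
        by apply: eq_integral => r _; rewrite -EFinM; congr EFin; ring.
      apply: G2; first by rewrite !mulr_ge0.
      move=> r; rewrite /= in_itv /= => /andP[sr rt].
      by rewrite lee_fin hW0 // (lt_trans s0 sr) rt.
    apply: G2; first by rewrite !mulr_ge0.
    move=> r; rewrite /= in_itv /= => /andP[sr rt].
    have W0 : 0 <= W t' r by rewrite hW0 // (lt_trans s0 sr) rt.
    by apply: mule_ge0; rewrite ?lee_fin.
  have g0 : 0 < (t' - s) `^ gamma by apply: powR_gt0; rewrite subr_gt0.
  have st'' : 0 < s < t' by rewrite s0 st'.
  have IW0 : (0 <= \int[leb]_(r in `]s, t'[) (W t' r)%:E)%E.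
    apply: integral_ge0 => r; rewrite /= in_itv /= => /andP[sr rt].
    by rewrite lee_fin hW0 // (lt_trans s0 sr) rt.
  have II0 : (0 <= \int[leb]_(r in `]s, t'[) ((W t' r)%:E * J r))%E.
    apply: integral_ge0 => r; rewrite /= in_itv /= => /andP[sr rt].
    have W0 : 0 <= W t' r by rewrite hW0 // (lt_trans s0 sr) rt.
    by apply: mule_ge0; rewrite ?lee_fin.
  have [IWE gIW] := @fin_of_bd R _ _ _ g0 IW0 (hiii2b t' s st'' t'tau).
  have [IIE gII] := @fin_of_bd R _ _ _ g0 II0 (hiii3b t' s st'' t'tau).
  pose IWr := fine (\int[leb]_(r in `]s, t'[) (W t' r)%:E)%E.
  pose IIr := fine (\int[leb]_(r in `]s, t'[) ((W t' r)%:E * J r))%E.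
  have IWE' : (\int[leb]_(r in `]s, t'[) (W t' r)%:E)%E = IWr%:E := IWE.
  have IIE' : (\int[leb]_(r in `]s, t'[) ((W t' r)%:E * J r))%E = IIr%:E := IIE.
  have gIW' : (t' - s) `^ gamma * IWr <= Wbar := gIW.
  have gII' : (t' - s) `^ gamma * IIr <= Wbbar := gII.
  have IWr0 : 0 <= IWr by rewrite -lee_fin -IWE'.
  have IIr0 : 0 <= IIr by rewrite -lee_fin -IIE'.
  have E1 : ni t' <= W t' s * pi + (Eim * (Wmq * pm) * IWr + Eim * (Wmq * Emi * Y) * IIr).
    rewrite -lee_fin -(niE _ ht); apply: le_trans (EQI t' ht) _; rewrite piE EFinD EFinM.
    apply: leeD2l; apply: le_trans hK _; apply: le_trans hK2 _.
    by rewrite IWE' IIE' -!EFinM -EFinD.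
  have gW := hiii1 t' s st'' t'tau.
  have : 0 <= Eim * (Wmq * pm) by rewrite !mulr_ge0.
  have : 0 <= Eim * (Wmq * Emi * Y) by rewrite !mulr_ge0.
  move: E1 gW gIW' gII' g0 (ni0 t') pi0; nra.
have Xb : X <= tau `^ gamma * Wmq * pm + Wmq * Emi * pi * Wbar + Wmq * Emi * Eim * X * Wbbar.
  apply: ge_sup; first by exists ((tau - s) `^ gamma * nm tau); exists tau.
  by move=> x [t' ht' ->]; exact: CX.
have Yb : Y <= Winfq * pi + Eim * Wmq * Wbar * pm + Eim * Wmq * Emi * Y * Wbbar.
  apply: ge_sup; first by exists ((tau - s) `^ gamma * ni tau); exists tau.
  by move=> x [t' ht' ->]; exact: CY.
have ht : s < t <= tau by rewrite st ttau.
have hbt : (((t - s) `^ gamma)%:E * wnorm nuF (b t) <=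
    ((t - s) `^ gamma * nm t + (t - s) `^ gamma * ni t)%:E)%E.
  rewrite -mulrDr EFinM lee_wpmul2l ?lee_fin ?powR_ge0 // EFinD -(nmE _ ht) -(niE _ ht).
  exact: (@wn_split _ _ _ hnu).
rewrite -(@wn_split_eq _ _ _ hnu m psi) pmE piE -EFinD -EFinM.
apply: le_trans hbt _; rewrite lee_fin.
pose M := mxnorm1 (\matrix_(i < 2, j < 2)
              nth 0 (nth [::] [:: [:: tau `^ gamma * Wmq; Wmq * Wbar * Emi];
                                  [:: Wmq * Wbar * Eim; Winfq]] i) j).
have WqE : Wq = kappa^-1 * M by [].
have kE : kappa = 1 - Wmq * Wbbar * Emi * Eim by [].
have hM := @mx_bd R (tau `^ gamma * Wmq) (Wmq * Wbar * Emi) (Wmq * Wbar * Eim) Winfq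
  (mulr_ge0 (powR_ge0 _ _) Wmq0) (mulr_ge0 (mulr_ge0 Wmq0 hWbar) Emi0)
  (mulr_ge0 (mulr_ge0 Wmq0 hWbar) Eim0) (ltW hWinfq).
rewrite -/M in hM; case: hM => hM1 hM2.
have F1 : (t - s) `^ gamma * nm t + (t - s) `^ gamma * ni t <= X + Y.
  by apply: lerD; [exact: hX | exact: hY].
have F3 : (tau `^ gamma * Wmq + Wmq * Wbar * Eim) * pm + (Wmq * Wbar * Emi + Winfq) * pi
    <= M * (pm + pi).
  by rewrite mulrDr; apply: lerD; apply: ler_wpM2r.
have F2 : kappa * (X + Y) <= M * (pm + pi).
  apply: le_trans F3; rewrite kE; move: Xb Yb; nra.
rewrite WqE -(ler_pM2l hkappa) !mulrA mulfV ?gt_eqF // mul1r.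
apply: le_trans F2; rewrite ler_pM2l //.
Qed.
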